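(* Let $\alpha\in\mathbb{N}=\{0,1,2,\dots\}$ and let $m$ be a positive odd integer with $m>4\alpha+2$. Let $\mathbb{S}=\langle 4,4\alpha+2,m\rangle$. Then the set of Betti elements of $\mathbb{S}$ is $Betti(\mathbb{S})=\{8\alpha+4,\,2m\}$.
   Context: $\mathbb{N}$ denotes the set of nonnegative integers. For positive integers $a_1,\dots,a_e$ with $\gcd=1$, $\langle a_1,\dots,a_e\rangle=\{\lambda_1a_1+\dots+\lambda_ea_e:\lambda_i\in\mathbb{N}\}$ is a numerical semigroup. For $a\in\mathbb{S}$, the set of factorizations of $a$ with respect to the listed generators is $Z(a)=\{(\eta_1,\dots,\eta_e)\in\mathbb{N}^e:\eta_1a_1+\dots+\eta_ea_e=a\}$. For $x,y\in\mathbb{N}^e$, $\gcd\{x,y\}$ is the componentwise minimum. For $a\in\mathbb{S}\setminus\{0\}$, let $\nabla_a$ be the graph with vertex set $Z(a)$ in which $x,y$ are joined by an edge if $\gcd\{x,y\}\neq 0$. The element $a$ is a Betti element of $\mathbb{S}$ if $\nabla_a$ is disconnected; $Betti(\mathbb{S})$ denotes the set of Betti elements. *)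

(* Defs.v *)
From mathcomp Require Import all_boot.
From Stdlib Require Import Relations.
Set Implicit Arguments. Unset Strict Implicit. Unset Printing Implicit Defensive.

Definition is_factorization (gens : seq nat) (a : nat) (x : seq nat) : Prop :=
  size x = size gens /\ \sum_(i < size gens) nth 0 x i * nth 0 gens i = a.

Definition in_semigroup (gens : seq nat) (a : nat) : Prop :=
  exists x, is_factorization gens a x.

Definition gcd_vec (x y : seq nat) : seq nat :=
  [seq minn p.1 p.2 | p <- zip x y].

Definition nabla_edge (gens : seq nat) (a : nat) (x y : seq nat) : Prop :=
  is_factorization gens a x /\ is_factorization gens a y /\
  gcd_vec x y <> nseq (size gens) 0.

Definition nabla_connected (gens : seq nat) (a : nat) : Prop :=
  forall x y, is_factorization gens a x -> is_factorization gens a y ->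
    clos_refl_trans (seq nat) (nabla_edge gens a) x y.

Definition is_betti (gens : seq nat) (a : nat) : Prop :=
  in_semigroup gens a /\ a <> 0 /\ ~ nabla_connected gens a.

(* Main.v *)
Require Import Defs.
From mathcomp Require Import all_boot.
From mathcomp Require Import zify.
From Stdlib Require Import Relations Lia.

Lemma factE (b m a : nat) (x : seq nat) :
  is_factorization [:: 4; b; m] a x <->
  exists p q r, x = [:: p; q; r] /\ p * 4 + q * b + r * m = a.
Proof.
split.
- case=> hs; case: x hs => [|p [|q [|r [|? ?]]]] //= _.
  rewrite !big_ord_recl big_ord0 /= => <-.
  by exists p, q, r; split => //; lia.
- case=> p [q [r [-> <-]]]; split => //.
  rewrite !big_ord_recl big_ord0 /=; lia.
Qed.

Lemma edge3 b m a p q r p' q' r' :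
  p*4+q*b+r*m = a -> p'*4+q'*b+r'*m = a ->
  (0 < minn p p') || (0 < minn q q') || (0 < minn r r') ->
  nabla_edge [:: 4; b; m] a [::p;q;r] [::p';q';r'].
Proof.
move=> h1 h2 h; split; [|split].
- by apply/factE; exists p, q, r.
- by apply/factE; exists p', q', r'.
- rewrite /gcd_vec /=; case=> e1 e2 e3; move: h; by rewrite e1 e2 e3.
Qed.

Lemma edge3E b m a p q r y :
  nabla_edge [:: 4; b; m] a [::p;q;r] y ->
  exists p' q' r', y = [::p';q';r'] /\ p'*4+q'*b+r'*m = a /\
    ((0 < minn p p') || (0 < minn q q') || (0 < minn r r')).
Proof.
case=> _ [/factE [p' [q' [r' [-> h]]]] hg].
exists p', q', r'; split => //; split => //.
move: hg; rewrite /gcd_vec /=.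
case: (minn p p') => [|?]; case: (minn q q') => [|?]; case: (minn r r') => [|?] //.
Qed.

Lemma gcd_vecC x y : gcd_vec x y = gcd_vec y x.
Proof.
elim: x y => [|u x IH] [|v y] //.
rewrite /gcd_vec /=. move: (IH y); rewrite /gcd_vec => ->. by rewrite minnC.
Qed.

Lemma edge_sym gens a x y : nabla_edge gens a x y -> nabla_edge gens a y x.
Proof. by case=> h1 [h2 h3]; split; [|split]; rewrite // gcd_vecC. Qed.

Lemma crt_sym (A : Type) (R : relation A) :
  (forall x y, R x y -> R y x) ->
  forall x y, clos_refl_trans A R x y -> clos_refl_trans A R y x.
Proof.
move=> hs x y; elim=> [u v /hs h|u|u v w _ h1 _ h2].
- exact: rt_step.
- exact: rt_refl.
- exact: rt_trans h2 h1.
Qed.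

Lemma crt_iso (A : Type) (R : relation A) u :
  (forall w, R u w -> w = u) ->
  forall x y, clos_refl_trans A R x y -> x = u -> y = u.
Proof.
move=> hu x y; elim=> [v w h e| v e | v w z _ h1 _ h2 e].
- rewrite e in h; exact: hu _ h.
- done.
- exact: h2 (h1 e).
Qed.

Lemma reduce alpha m x0 a :
  x0 * 4 + (4 * alpha + 2) = 2 * m ->
  a <> 8 * alpha + 4 -> a <> 2 * m ->
  forall n p q r, q + r <= n -> p*4+q*(4*alpha+2)+r*m = a ->
  exists p' q' r', q' <= 1 /\ r' <= 1 /\ p'*4+q'*(4*alpha+2)+r'*m = a /\
    clos_refl_trans _ (nabla_edge [:: 4; 4 * alpha + 2; m] a)
      [::p;q;r] [::p';q';r'].
Proof.
move=> hx0 ha1 ha2; elim=> [|n IH] p q r hn h.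
  have [e1 e2] : q = 0 /\ r = 0 by lia.
  subst q r; exists p, 0, 0; do 3 (split => //); exact: rt_refl.
case: (leqP 2 q) => hq.
  have [q2 eq] : exists q2, q = q2.+2 by exists (q - 2); lia.
  subst q.
  have h' : (p + (2*alpha+1))*4 + q2*(4*alpha+2) + r*m = a by nia.
  have hn' : q2 + r <= n by lia.
  have [p' [q' [r' [h1 [h2 [h3 h4]]]]]] := IH _ _ _ (hn' : _ <= n) h'.
  exists p', q', r'; do 3 (split => //).
  apply: rt_trans h4; apply: rt_step; apply: edge3 => //.
  have : (0 < p) || (0 < q2) || (0 < r).
    lia.
  rewrite (_ : minn p (p + (2 * alpha + 1)) = p); last by lia.
  rewrite (_ : minn q2.+2 q2 = q2); last by lia.
  by rewrite minnn.
case: (leqP 2 r) => hr.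
  have [r2 eq] : exists r2, r = r2.+2 by exists (r - 2); lia.
  subst r.
  have h' : (p + x0)*4 + q.+1*(4*alpha+2) + r2*m = a by nia.
  have hn' : q.+1 + r2 <= n by lia.
  have [p' [q' [r' [h1 [h2 [h3 h4]]]]]] := IH _ _ _ (hn' : _ <= n) h'.
  exists p', q', r'; do 3 (split => //).
  apply: rt_trans h4; apply: rt_step; apply: edge3 => //.
  have : (0 < p) || (0 < q) || (0 < r2).
    lia.
  rewrite (_ : minn p (p + x0) = p); last by lia.
  rewrite (_ : minn q q.+1 = q); last by lia.
  rewrite (_ : minn r2.+2 r2 = r2); last by lia.
  done.
exists p, q, r; do 3 (split => //; try lia); exact: rt_refl.
Qed.

Lemma nf_uniq alpha m p q r p' q' r' : odd m -> q <= 1 -> r <= 1 -> q' <= 1 -> r' <= 1 ->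
  p*4+q*(4*alpha+2)+r*m = p'*4+q'*(4*alpha+2)+r'*m -> [::p;q;r] = [::p';q';r'].
Proof.
move=> hm.
have hk : m = (m./2).*2 + 1 by rewrite -{1}(odd_double_half m) hm addnC.
move: (m./2) hk => k ->.
case: q => [|[|q]] // _; case: r => [|[|r]] // _;
case: q' => [|[|q']] // _; case: r' => [|[|r']] // _ h;
  (have -> : p = p' by lia); try lia; by [].
Qed.

Lemma betti_2b alpha m : odd m -> 4 * alpha + 2 < m ->
  is_betti [:: 4; 4 * alpha + 2; m] (8 * alpha + 4).
Proof.
move=> hm hlt.
have hk : m = (m./2).*2 + 1 by rewrite -{1}(odd_double_half m) hm addnC.
have hf : forall p q r, p*4+q*(4*alpha+2)+r*m = 8*alpha+4 ->
   [::p;q;r] = [::2*alpha+1;0;0] \/ [::p;q;r] = [::0;2;0].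
  move=> p q r h.
  case: r h => [|[|r]] h.
  - case: q h => [|[|[|q]]] h.
    + by left; have -> : p = 2*alpha+1 by lia.
    + exfalso; lia.
    + by right; have -> : p = 0 by lia.
    + exfalso; have : 3 * (4*alpha+2) <= q.+3 * (4*alpha+2) by apply: leq_mul.
      lia.
  - exfalso; move: h; rewrite hk; lia.
  - exfalso; have : 2 * m <= r.+2 * m by apply: leq_mul.
    lia.
split; [|split].
- by exists [::2*alpha+1;0;0]; apply/factE; exists (2*alpha+1), 0, 0; split => //; lia.
- lia.
move=> hc.
have hu : forall w, nabla_edge [:: 4; 4 * alpha + 2; m] (8 * alpha + 4) [::2*alpha+1;0;0] w ->
   w = [::2*alpha+1;0;0].
  move=> w /edge3E [p' [q' [r' [-> [h hg]]]]].
  case: (hf _ _ _ h) => [-> //| [e1 e2 e3]].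
  by move: hg; rewrite e1 e2 e3 minn0 !min0n.
have e1 : is_factorization [:: 4; 4 * alpha + 2; m] (8 * alpha + 4) [::2*alpha+1;0;0].
  by apply/factE; exists (2*alpha+1), 0, 0; split => //; lia.
have e2 : is_factorization [:: 4; 4 * alpha + 2; m] (8 * alpha + 4) [::0;2;0].
  by apply/factE; exists 0, 2, 0; split => //; lia.
by move: (@crt_iso _ _ _ hu _ _ (hc _ _ e1 e2) erefl); case.
Qed.

Lemma betti_2m alpha m : odd m -> 4 * alpha + 2 < m ->
  is_betti [:: 4; 4 * alpha + 2; m] (2 * m).
Proof.
move=> hm hlt.
have hk : m = (m./2).*2 + 1 by rewrite -{1}(odd_double_half m) hm addnC.
have [x0 hx0] : exists x0, x0 * 4 + (4 * alpha + 2) = 2 * m.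
  by exists (m./2 - alpha); lia.
split; [|split].
- by exists [::0;0;2]; apply/factE; exists 0, 0, 2; split => //; lia.
- lia.
move=> hc.
have hu : forall w, nabla_edge [:: 4; 4 * alpha + 2; m] (2 * m) [::0;0;2] w ->
   w = [::0;0;2].
  move=> w /edge3E [p' [q' [r' [-> [h hg]]]]].
  move: hg; rewrite !min0n /= => hg.
  case: r' h hg => [|[|[|r']]] h //.
  - exfalso; move: h; rewrite hk; lia.
  - by have [-> ->] : p' = 0 /\ q' = 0 by nia.
  - exfalso; nia.
have e1 : is_factorization [:: 4; 4 * alpha + 2; m] (2 * m) [::0;0;2].
  by apply/factE; exists 0, 0, 2; split => //; lia.
have e2 : is_factorization [:: 4; 4 * alpha + 2; m] (2 * m) [::x0;1;0].
  by apply/factE; exists x0, 1, 0; split => //; lia.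
by move: (@crt_iso _ _ _ hu _ _ (hc _ _ e1 e2) erefl); case.
Qed.

Theorem theorem3 (alpha m : nat) :
  odd m -> 0 < m -> 4 * alpha + 2 < m ->
  forall a : nat,
    is_betti [:: 4; 4 * alpha + 2; m] a <-> (a = 8 * alpha + 4 \/ a = 2 * m).
Proof.
move=> hm _ hlt a; split; last first.
  by case=> ->; [exact: betti_2b | exact: betti_2m].
case=> _ [_ hnc].
case: (eqVneq a (8 * alpha + 4)) => [|ha1]; first by left.
case: (eqVneq a (2 * m)) => [|ha2]; first by right.
exfalso; apply: hnc => x y /factE [p [q [r [-> hx]]]] /factE [p' [q' [r' [-> hy]]]].
have hk : m = (m./2).*2 + 1 by rewrite -{1}(odd_double_half m) hm addnC.
have [x0 hx0] : exists x0, x0 * 4 + (4 * alpha + 2) = 2 * m.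
  by exists (m./2 - alpha); lia.
have ha1' : a <> 8 * alpha + 4 by apply/eqP.
have ha2' : a <> 2 * m by apply/eqP.
have [u1 [u2 [u3 [hu1 [hu2 [hu3 hu]]]]]] :=
  @reduce alpha m x0 a hx0 ha1' ha2' _ _ _ _ (leqnn (q + r)) hx.
have [v1 [v2 [v3 [hv1 [hv2 [hv3 hv]]]]]] :=
  @reduce alpha m x0 a hx0 ha1' ha2' _ _ _ _ (leqnn (q' + r')) hy.
have e : [:: u1; u2; u3] = [:: v1; v2; v3].
  by apply: (@nf_uniq alpha m) => //; rewrite hu3 hv3.
apply: rt_trans hu _; rewrite e.
apply: crt_sym hv; exact: edge_sym.
Qed.
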